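(* Let $G$ be a graph, $k,d$ integers, $X$ a minimum vertex cover of $G$ that is also an independent set of $G$, $Y=V(G)\setminus X$, and $X_L,X_R$ disjoint subsets of $X$. Then $((G,k,d),X,\langle X_L,X_R\rangle)$ is a Yes-instance of \textsc{Annotated Contraction(vc)} if and only if it is a Yes-instance of \textsc{Constrained MaxCut}.
   Context: All graphs are finite, simple and undirected. $\mathrm{rank}(H)$ is $|V(H)|$ minus the number of connected components of $H$; for $S\subseteq V(G)$, $\mathrm{rank}(S):=\mathrm{rank}(G[S])$; for an edge set $F$, $\mathrm{rank}(F):=\mathrm{rank}(G[V(F)])$ where $V(F)$ is the set of endpoints of $F$. For $S_1,S_2\subseteq V(G)$, $E(S_1,S_2)$ is the set of edges with one endpoint in $S_1$ and the other in $S_2$. The instance is a Yes-instance of \textsc{Annotated Contraction(vc)} iff there exist $X_s\subseteq X$ and $Y_s\subseteq Y$ with (i) $(X\setminus X_s)\cup Y_s$ is a vertex cover of $G$, (ii) $\mathrm{rank}((X\setminus X_s)\cup Y_s)\ge k$, (iii) $|Y_s|-|X_s|\le k-d$, (iv) $X_L\cap X_s=\emptyset$ and $X_R\subseteq X_s$. It is a Yes-instance of \textsc{Constrained MaxCut} iff there exists a partition $\langle V_L,V_R\rangle$ of $V(G)$ with (i) $E(V_L\cap Y,V_R\cap X)=\emptyset$, (ii) $\mathrm{rank}(E(V_L\cap X,V_R\cap Y))\ge k$, (iii) $|V_R\cap Y|-|V_R\cap X|\le k-d$, (iv) $X_L\subseteq V_L$ and $X_R\subseteq V_R$. *)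

(* Defs.v *)
(* A simple graph G is a finite type T of vertices with an
   irreflexive symmetric adjacency relation e. *)
From mathcomp Require Import all_boot all_order all_algebra.
Set Implicit Arguments. Unset Strict Implicit. Unset Printing Implicit Defensive.

Section Graphs.
Variables (T : finType) (e : rel T).

Definition induced_rel (S : {set T}) : rel T :=
  fun x y => [&& e x y, x \in S & y \in S].

Definition comp_of (S : {set T}) (x : T) : {set T} :=
  [set y in S | connect (induced_rel S) x y].

Definition ncomp (S : {set T}) : nat := #|[set comp_of S x | x in S]|.

Definition rank_set (S : {set T}) : nat := #|S| - ncomp S.

Definition endpoints_between (A B : {set T}) : {set T} :=
  [set v | [exists u, e u v && (((u \in A) && (v \in B)) || ((u \in B) && (v \in A)))]].

(* rank(E(A,B)) = rank(G[V(E(A,B))]) *)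
Definition rank_edges (A B : {set T}) : nat := rank_set (endpoints_between A B).

Definition no_edges_between (A B : {set T}) : Prop :=
  forall u v, u \in A -> v \in B -> ~~ e u v.

Definition vertex_cover (C : {set T}) : Prop :=
  forall x y, e x y -> (x \in C) || (y \in C).

Definition min_vertex_cover (C : {set T}) : Prop :=
  vertex_cover C /\ forall C' : {set T}, vertex_cover C' -> #|C| <= #|C'|.

Definition independent (S : {set T}) : Prop :=
  forall x y, x \in S -> y \in S -> ~~ e x y.

Definition annotated_contraction_vc (k d : int) (X XL XR : {set T}) : Prop :=
  let Y := ~: X in
  exists Xs Ys : {set T},
    [/\ Xs \subset X /\ Ys \subset Y,
        vertex_cover ((X :\: Xs) :|: Ys),
        (k <= (rank_set ((X :\: Xs) :|: Ys))%:Z)%R,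
        ((#|Ys|%:Z - #|Xs|%:Z) <= k - d)%R
      & [disjoint XL & Xs] /\ XR \subset Xs].

Definition constrained_maxcut (k d : int) (X XL XR : {set T}) : Prop :=
  let Y := ~: X in
  exists VL : {set T},
    let VR := ~: VL in
    [/\ no_edges_between (VL :&: Y) (VR :&: X),
        (k <= (rank_edges (VL :&: X) (VR :&: Y))%:Z)%R,
        ((#|VR :&: Y|%:Z - #|VR :&: X|%:Z) <= k - d)%R
      & XL \subset VL /\ XR \subset VR].

End Graphs.

(* Main.v *)
Require Import Defs.
From mathcomp Require Import all_boot all_order all_algebra.

Section Rk.
Variables (T : finType) (e : rel T) (e_sym : symmetric e).

Lemma rank_iso (S : {set T}) :
  rank_set e S = rank_set e [set v in S | [exists u, (u \in S) && e v u]].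
Proof.
set N := [set v in S | _].
have NS : N \subset S by apply/subsetP => v; rewrite inE => /andP[].
have Hrel : induced_rel e S =2 induced_rel e N.
  move=> a b; rewrite /induced_rel !inE.
  case eab: (e a b) => //=.
  case aS: (a \in S); case bS: (b \in S); rewrite /= ?andbF //; symmetry.
  apply/andP; split; apply/existsP; [exists b | exists a];
    by rewrite ?aS ?bS //= ?eab // e_sym.
have cl : closed (induced_rel e N) (mem N).
  by move=> a0 b0 /and3P[_ -> ->].
have compN : forall x, x \in N -> comp_of e S x = comp_of e N x.
  move=> x xN; apply/setP => y; rewrite !inE (eq_connect Hrel).
  case c: (connect _ x y); rewrite ?andbF ?andbT //.
  have yN : y \in N by rewrite -(closed_connect cl c).
  by move: yN; rewrite inE => /andP[-> ->].
have compI : forall x, x \in S :\: N -> comp_of e S x = [set x].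
  move=> x; rewrite inE => /andP[xN xS]; apply/setP => y; rewrite !inE.
  case: (eqVneq y x) => [->|nyx]; first by rewrite xS connect0.
  suff -> : connect (induced_rel e S) x y = false by rewrite andbF.
  apply/negbTE/negP => /connectP [[|z p]] /=.
    by move=> _ yx; rewrite yx eqxx in nyx.
  move=> /andP[/and3P[exz _ zS] _] _.
  move: xN; rewrite inE xS /=; apply/negP; rewrite negbK.
  by apply/existsP; exists z; rewrite zS exz.
have Heq : [set comp_of e S x | x in S] =
    [set comp_of e N x | x in N] :|: [set [set x] | x in S :\: N].
  apply/setP => C; apply/imsetP/setUP.
    move=> [x xS ->]; case xN: (x \in N).
      by left; apply/imsetP; exists x; rewrite ?compN.
    right; apply/imsetP; exists x; first by rewrite inE xN.
    by rewrite compI // inE xN.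
  move=> [/imsetP [x xN ->]|/imsetP [x xSN ->]].
    by exists x; rewrite ?compN // (subsetP NS).
  exists x; first by move: xSN; rewrite inE => /andP[].
  by rewrite compI.
have Hdis : [set comp_of e N x | x in N] :&: [set [set x] | x in S :\: N] = set0.
  apply/setP => C; rewrite !inE; apply/negbTE/negP => /andP[/imsetP [x xN ->] /imsetP [z zSN]].
  move=> H.
  have : x \in comp_of e N x by rewrite inE xN connect0.
  rewrite H inE => /eqP xz; move: zSN; rewrite -xz inE xN.
  by [].
rewrite /rank_set /ncomp Heq cardsU Hdis cards0 subn0.
rewrite (card_imset _ (@set1_inj T)).
rewrite -(cardsID N S) (setIidPr NS).
by rewrite subnDr.
Qed.
Lemma rank_edges_set (X A B : {set T}) :
  vertex_cover e X -> independent e X -> A \subset X -> B \subset ~: X ->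
  rank_edges e A B = rank_set e (A :|: B).
Proof.
move=> vc ind sA sB; rewrite /rank_edges (rank_iso (A :|: B)); congr rank_set.
apply/setP => v; rewrite !inE; apply/existsP/andP.
  move=> [u /andP[euv H]]; split.
    by case/orP: H => /andP[uA vB]; rewrite ?uA ?vB ?orbT.
  by apply/existsP; exists u; rewrite inE e_sym euv andbT;
     case/orP: H => /andP[uA vB]; rewrite ?uA ?vB ?orbT.
move=> [vAB /existsP [u /andP[uAB evu]]]; exists u; rewrite e_sym evu /=.
have hA := subsetP sA; have hB := subsetP sB.
case/orP: vAB => vI; move: uAB; rewrite inE => /orP[] uI; rewrite ?vI ?uI ?orbT //.
- by move: (ind v u (hA _ vI) (hA _ uI)); rewrite evu.
- move: (vc v u evu) (hB _ vI) (hB _ uI); rewrite !inE.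
  by case: (v \in X); case: (u \in X).
Qed.
End Rk.

Ltac bt := intros; simpl in *; try discriminate; try done.

Theorem lemma15 (T : finType) (e : rel T) (e_sym : symmetric e) (e_irr : irreflexive e)
  (k d : int) (X XL XR : {set T}) :
  min_vertex_cover e X -> independent e X ->
  XL \subset X -> XR \subset X -> [disjoint XL & XR] ->
  annotated_contraction_vc e k d X XL XR <-> constrained_maxcut e k d X XL XR.
Proof.
move=> [vcX _] indX sXL sXR dLR; split.
- move=> [Xs [Ys [[hXs hYs] vc rk cd [dL sR]]]].
  have hX := subsetP hXs; have hY := subsetP hYs.
  exists (~: (Xs :|: Ys)); rewrite setCK.
  have E1 : ~: (Xs :|: Ys) :&: X = X :\: Xs.
    apply/setP => v; move/implyP: (hX v); move/implyP: (hY v); rewrite !inE.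
    by case: (v \in X); case: (v \in Xs); case: (v \in Ys).
  have E2 : (Xs :|: Ys) :&: ~: X = Ys.
    apply/setP => v; move/implyP: (hX v); move/implyP: (hY v); rewrite !inE.
    by case: (v \in X); case: (v \in Xs); case: (v \in Ys).
  have E3 : (Xs :|: Ys) :&: X = Xs.
    apply/setP => v; move/implyP: (hX v); move/implyP: (hY v); rewrite !inE.
    by case: (v \in X); case: (v \in Xs); case: (v \in Ys).
  split.
  + move=> u v; rewrite E3 !inE => /andP[uN uX] vXs; apply/negP => euv.
    have vY : v \notin Ys by apply/negP => /hY; rewrite inE (hX v vXs).
    move: (vc u v euv) uN uX (hX v vXs); rewrite !inE vXs (negbTE vY) /=.
    by case: (u \in X); case: (u \in Xs); case: (u \in Ys); intros; simpl in *; try discriminate.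
  + by rewrite E1 E2 (@rank_edges_set T e e_sym X _ _ vcX indX) // ?subsetDl.
  + by rewrite E2 E3.
  + split; apply/subsetP => x xI; rewrite !inE.
      have xX := subsetP sXL x xI.
      have := disjointFr dL xI; move: (hY x); rewrite !inE xX => /=.
      by move=> H ->; case: (x \in Ys) H => //= /(_ isT).
    by rewrite (subsetP sR).
- move=> [VL [ne rk cd [sL sR]]].
  exists (~: VL :&: X), (~: VL :&: ~: X).
  have E1 : X :\: (~: VL :&: X) = VL :&: X.
    by apply/setP => v; rewrite !inE; case: (v \in X); case: (v \in VL).
  split.
  + by split; apply/subsetP => v; rewrite !inE => /andP[].
  + move=> x y exy; move: (vcX x y exy) (indX x y) (indX y x) (ne x y) (ne y x).
    rewrite !inE exy e_sym exy.
    by case: (x \in X); case: (y \in X); case: (x \in VL); case: (y \in VL);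
      move=> //= _ H1 H2 H3 H4; try (by have := H1 isT isT);
      try (by have := H2 isT isT); try (by have := H3 isT isT);
      try (by have := H4 isT isT).
  + rewrite E1 -(@rank_edges_set T e e_sym X _ _ vcX indX) //; first exact: subsetIr.
    exact: subsetIr.
  + exact: cd.
  + split.
      apply/pred0P => x /=; apply/negP => /andP[xL]; rewrite !inE.
      by rewrite (subsetP sL x xL).
    apply/subsetP => x xR; have := subsetP sR x xR; rewrite !inE => ->.
    by rewrite (subsetP sXR x xR).
Qed.
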